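(* Let $X \subset \mathbb{R}^n$ be finite with at least $k+1$ points. Every element $(s,[x])$ of $\Gamma_{k}(X)$ has a unique largest branch point below it, i.e. there is a branch point $(s_{0},[x_{0}]) \leq (s,[x])$ such that every branch point $(t,[y]) \leq (s,[x])$ satisfies $(t,[y]) \leq (s_{0},[x_{0}])$.
   Context: $\mathbb{R}^n$ has Euclidean metric $d$. For $s\ge 0$, $V_s(X)$ is the Vietoris–Rips complex (vertex set $X$, simplices nonempty subsets with pairwise distances $\le s$), and for an integer $k\ge 0$, $L_{s,k}(X)$ is the full subcomplex of $V_s(X)$ on the vertices $x$ having at least $k$ points $x'\ne x$ of $X$ with $d(x,x')\le s$. $\Gamma_{k}(X)$ is the poset whose elements are pairs $(s,[x])$ with $s \in \mathbb{R}_{\geq 0}$ and $[x] \in \pi_{0}L_{s,k}(X)$, with $(s,[x]) \leq (t,[y])$ iff $s \leq t$ and the function $\pi_{0}L_{s,k}(X) \to \pi_{0}L_{t,k}(X)$ induced by inclusion sends $[x]$ to $[y]$. An element $(t,[x])$ of $\Gamma_{k}(X)$ is a branch point if either (1) there is $s_{0} < t$ such that for all $s$ with $s_{0} \leq s < t$ there are two distinct elements $(s,[x_{0}]) \neq (s,[x_{1}])$ with $(s,[x_{0}]) \leq (t,[x])$ and $(s,[x_{1}]) \leq (t,[x])$; or (2) there is no element $(s,[y])$ with $s<t$ and $(s,[y]) \leq (t,[x])$. *)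

(* Defs.v *)
From Stdlib Require Import Reals List Relations.
Import ListNotations.
Open Scope R_scope.

(* A point of R^n is a list of n reals (the length constraint is imposed
   in the theorem statement). *)
Definition point := list R.

Definition dist (x y : point) : R :=
  sqrt (fold_right Rplus 0 (map (fun p => (fst p - snd p) ^ 2) (combine x y))).

(* Vertices of L_{s,k}(X): points x of X having at least k points x' <> x
   of X with d(x,x') <= s. *)
Definition core (X : list point) (k : nat) (s : R) (x : point) : Prop :=
  In x X /\
  exists L : list point, NoDup L /\ length L = k /\
    forall y, In y L -> In y X /\ y <> x /\ dist x y <= s.

(* Edges of L_{s,k}(X) (1-simplices of the full subcomplex of V_s(X)). *)
Definition edge (X : list point) (k : nat) (s : R) (x y : point) : Prop :=
  core X k s x /\ core X k s y /\ dist x y <= s.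

(* x and y are vertices of L_{s,k}(X) in the same path component,
   i.e. [x] = [y] in pi_0 L_{s,k}(X). *)
Definition same_comp (X : list point) (k : nat) (s : R) (x y : point) : Prop :=
  core X k s x /\ core X k s y /\ clos_refl_trans point (edge X k s) x y.

(* (s,[x]) is an element of Gamma_k(X), represented by s and a vertex x. *)
Definition gelem (X : list point) (k : nat) (s : R) (x : point) : Prop :=
  0 <= s /\ core X k s x.

(* The order of Gamma_k(X): (s,[x]) <= (t,[y]) iff s <= t and the map
   pi_0 L_{s,k} -> pi_0 L_{t,k} induced by inclusion sends [x] to [y]. *)
Definition gle (X : list point) (k : nat) (s : R) (x : point) (t : R) (y : point) : Prop :=
  s <= t /\ same_comp X k t x y.

Definition branch_point (X : list point) (k : nat) (t : R) (x : point) : Prop :=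
  (exists s0, s0 < t /\
     forall s, s0 <= s < t ->
       exists x0 x1, gelem X k s x0 /\ gelem X k s x1 /\
         ~ same_comp X k s x0 x1 /\
         gle X k s x0 t x /\ gle X k s x1 t x)
  \/
  (~ exists s y, s < t /\ gelem X k s y /\ gle X k s y t x).

(* Main.v *)
Require Import Defs.
From Stdlib Require Import Reals List Relations Lra Classical.
Import ListNotations.
Open Scope R_scope.

Lemma sum_sym : forall x y : point,
  fold_right Rplus 0 (map (fun p => (fst p - snd p)^2) (combine x y)) =
  fold_right Rplus 0 (map (fun p => (fst p - snd p)^2) (combine y x)).
Proof.
  induction x as [|a x IH]; destruct y as [|b y]; simpl; auto.
  rewrite IH. f_equal. ring.
Qed.

Lemma dist_sym : forall x y, Defs.dist x y = Defs.dist y x.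
Proof. intros; unfold Defs.dist; rewrite sum_sym; auto. Qed.

Lemma dist_nonneg : forall x y, 0 <= Defs.dist x y.
Proof. intros; unfold Defs.dist; apply sqrt_pos. Qed.

Lemma rt_sym {A} (R: relation A) : (forall a b, R a b -> R b a) ->
  forall a b, clos_refl_trans A R a b -> clos_refl_trans A R b a.
Proof.
  intros HR a b H; induction H; [apply rt_step; auto | apply rt_refl | eapply rt_trans; eauto].
Qed.

Lemma rt_mono {A} (R1 R2: relation A) : (forall a b, R1 a b -> R2 a b) ->
  forall a b, clos_refl_trans A R1 a b -> clos_refl_trans A R2 a b.
Proof.
  intros HR a b H; induction H; [apply rt_step; auto | apply rt_refl | eapply rt_trans; eauto].
Qed.

Lemma edge_sym X k s x y : edge X k s x y -> edge X k s y x.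
Proof. intros [H1 [H2 H3]]; split; auto; split; auto; rewrite dist_sym; auto. Qed.

Lemma same_comp_sym X k s x y : same_comp X k s x y -> same_comp X k s y x.
Proof.
  intros [H1 [H2 H3]]; split; auto; split; auto.
  apply rt_sym; auto. apply edge_sym.
Qed.

Lemma same_comp_trans X k s x y z :
  same_comp X k s x y -> same_comp X k s y z -> same_comp X k s x z.
Proof.
  intros [H1 [H2 H3]] [H4 [H5 H6]]; split; auto; split; auto.
  eapply rt_trans; eauto.
Qed.

Lemma core_mono X k t1 t2 x : t1 <= t2 -> core X k t1 x -> core X k t2 x.
Proof.
  intros Ht [Hin [L [Hnd [Hlen HL]]]]; split; auto; exists L; split; auto; split; auto.
  intros y Hy; destruct (HL y Hy) as [? [? ?]]; split; auto; split; auto; lra.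
Qed.

Lemma edge_mono X k t1 t2 x y : t1 <= t2 -> edge X k t1 x y -> edge X k t2 x y.
Proof.
  intros Ht [H1 [H2 H3]]; split; [|split]; try (eapply core_mono; eauto); lra.
Qed.

Lemma same_comp_mono X k t1 t2 x y : t1 <= t2 -> same_comp X k t1 x y -> same_comp X k t2 x y.
Proof.
  intros Ht [H1 [H2 H3]]; split; [|split]; try (eapply core_mono; eauto).
  eapply rt_mono; [|eauto]. intros; eapply edge_mono; eauto.
Qed.

Definition deq X t1 t2 := forall a b, In a X -> In b X -> (Defs.dist a b <= t1 <-> Defs.dist a b <= t2).

Lemma deq_sym X t1 t2 : deq X t1 t2 -> deq X t2 t1.
Proof. intros H a b Ha Hb; specialize (H a b Ha Hb); tauto. Qed.

Lemma core_deq X k t1 t2 x : deq X t1 t2 -> core X k t1 x -> core X k t2 x.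
Proof.
  intros Ht [Hin [L [Hnd [Hlen HL]]]]; split; auto; exists L; split; auto; split; auto.
  intros y Hy; destruct (HL y Hy) as [? [? ?]]; split; auto; split; auto.
  apply (Ht x y); auto.
Qed.

Lemma edge_deq X k t1 t2 x y : deq X t1 t2 -> edge X k t1 x y -> edge X k t2 x y.
Proof.
  intros Ht [H1 [H2 H3]]; split; [|split]; try (eapply core_deq; eauto).
  apply (Ht x y); auto; [destruct H1 | destruct H2]; auto.
Qed.

Lemma same_comp_deq X k t1 t2 x y : deq X t1 t2 -> same_comp X k t1 x y -> same_comp X k t2 x y.
Proof.
  intros Ht [H1 [H2 H3]]; split; [|split]; try (eapply core_deq; eauto).
  eapply rt_mono; [|eauto]. intros; eapply edge_deq; eauto.
Qed.

Definition D (X : list point) := 0 :: map (fun p => Defs.dist (fst p) (snd p)) (list_prod X X).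

Lemma D_in X a b : In a X -> In b X -> In (Defs.dist a b) (D X).
Proof.
  intros Ha Hb; right; apply in_map_iff; exists (a,b); split; auto; apply in_prod; auto.
Qed.

Lemma D_nonneg X d : In d (D X) -> 0 <= d.
Proof.
  intros [<-|H]; [lra|]. apply in_map_iff in H; destruct H as [[a b] [<- _]]; apply dist_nonneg.
Qed.

Lemma max_exists : forall (L: list R) (Q : R -> Prop), (exists d, In d L /\ Q d) ->
  exists m, In m L /\ Q m /\ forall d, In d L -> Q d -> d <= m.
Proof.
  induction L as [|a L IHL]; intros Q [d [Hd Hq]]. inversion Hd.
  destruct (classic (exists d, In d L /\ Q d)) as [He|Hn].
  - destruct (IHL Q He) as [m [Hm [Hqm Hmax]]].
    destruct (classic (Q a /\ m < a)) as [[Qa Hlt]|Hno].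
    + exists a; split; [left; auto|split; auto].
      intros d0 [<-|Hin] Hq0; [lra|specialize (Hmax d0 Hin Hq0); lra].
    + exists m; split; [right; auto|split; auto].
      intros d0 [<-|Hin] Hq0; [|auto].
      apply not_and_or in Hno; destruct Hno; [contradiction|lra].
  - destruct Hd as [<-|Hin]; [| exfalso; apply Hn; eauto].
    exists a; split; [left; auto|split; auto].
    intros d0 [<-|Hin] Hq0; [lra| exfalso; apply Hn; eauto].
Qed.

Lemma min_exists : forall (L: list R) (Q : R -> Prop), (exists d, In d L /\ Q d) ->
  exists m, In m L /\ Q m /\ forall d, In d L -> Q d -> m <= d.
Proof.
  induction L as [|a L IHL]; intros Q [d [Hd Hq]]. inversion Hd.
  destruct (classic (exists d, In d L /\ Q d)) as [He|Hn].
  - destruct (IHL Q He) as [m [Hm [Hqm Hmax]]].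
    destruct (classic (Q a /\ a < m)) as [[Qa Hlt]|Hno].
    + exists a; split; [left; auto|split; auto].
      intros d0 [<-|Hin] Hq0; [lra|specialize (Hmax d0 Hin Hq0); lra].
    + exists m; split; [right; auto|split; auto].
      intros d0 [<-|Hin] Hq0; [|auto].
      apply not_and_or in Hno; destruct Hno; [contradiction|lra].
  - destruct Hd as [<-|Hin]; [| exfalso; apply Hn; eauto].
    exists a; split; [left; auto|split; auto].
    intros d0 [<-|Hin] Hq0; [lra| exfalso; apply Hn; eauto].
Qed.

Definition Good X k s x t := 0 <= t /\ t <= s /\
  (exists y, core X k t y /\ same_comp X k s y x) /\
  (forall t', t <= t' <= s -> forall y z, core X k t' y -> core X k t' z ->
     same_comp X k s y x -> same_comp X k s z x -> same_comp X k t' y z).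

Theorem lemma11 (n k : nat) (X : list point)
  (HXn : forall x, In x X -> length x = n)
  (HXnd : NoDup X)
  (HXk : (k + 1 <= length X)%nat)
  (s : R) (x : point) (Hel : gelem X k s x) :
  exists s0 x0,
    gelem X k s0 x0 /\ branch_point X k s0 x0 /\ gle X k s0 x0 s x /\
    forall t y, gelem X k t y -> branch_point X k t y -> gle X k t y s x ->
      gle X k t y s0 x0.
Proof.
  destruct Hel as [Hs0 Hcx].
  destruct (max_exists (D X) (fun d => d <= s)) as [dm [HdmD [Hdms Hdmmax]]].
  { exists 0; split; [left; reflexivity | lra]. }
  assert (Hdeq1: forall t', dm <= t' <= s -> deq X t' s).
  { intros t' Ht a b Ha Hb. assert (Hd := D_in X a b Ha Hb).
    split; intro Hab; [lra | pose proof (Hdmmax _ Hd Hab); lra]. }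
  assert (Gdm: Good X k s x dm).
  { split; [apply (D_nonneg X); auto|]. split; auto. split.
    - exists x; split.
      + apply (core_deq X k s dm); [apply deq_sym, Hdeq1; lra | auto].
      + split; auto; split; auto; apply rt_refl.
    - intros t' Ht y z Hy Hz Hyx Hzx. apply (same_comp_deq X k s t').
      + apply deq_sym; apply Hdeq1; lra.
      + apply same_comp_trans with x; auto; apply same_comp_sym; auto. }
  destruct (min_exists (D X) (Good X k s x)) as [s0 [Hs0D [Gs0 Hmin]]]; [eauto|].
  destruct Gs0 as [Hs0nn [Hs0s [[x0 [Hcx0 Hx0x]] Huniq]]].
  exists s0, x0.
  assert (Hgle: gle X k s0 x0 s x) by (split; auto).
  split; [split; auto|]. split; [|split; auto].
  - destruct (classic (exists t y, t < s0 /\ gelem X k t y /\ gle X k t y s0 x0))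
      as [[t [y [Hts0 [[Ht0 Hcy] [_ Hyx0]]]]] | Hno]; [left | right; exact Hno].
    destruct (max_exists (D X) (fun d => d < s0)) as [d' [Hd'D [Hd's0 Hd'max]]].
    { exists 0; split; [left; auto| lra]. }
    assert (Hdeq2: forall t1 t2, d' <= t1 < s0 -> d' <= t2 < s0 -> deq X t1 t2).
    { intros t1 t2 H1 H2 a b Ha Hb; pose proof (D_in X a b Ha Hb) as Hd.
      split; intro Hab.
      - assert (Defs.dist a b <= d') by (apply Hd'max; auto; lra); lra.
      - assert (Defs.dist a b <= d') by (apply Hd'max; auto; lra); lra. }
    assert (Hnot: ~ Good X k s x d') by (intro G; pose proof (Hmin _ Hd'D G); lra).
    assert (Hd'nn : 0 <= d') by (apply (D_nonneg X); auto).
    assert (Hyx: same_comp X k s y x).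
    { apply same_comp_trans with x0; auto. apply same_comp_mono with s0; auto. }
    assert (Hcyd: core X k d' y).
    { destruct (Rle_dec t d'). apply core_mono with t; auto.
      apply (core_deq X k t d'); auto; apply Hdeq2; lra. }
    destruct (classic (exists t' y' z', d' <= t' <= s /\ core X k t' y' /\ core X k t' z' /\
       same_comp X k s y' x /\ same_comp X k s z' x /\ ~ same_comp X k t' y' z'))
      as [[t' [y' [z' [Ht' [Hy' [Hz' [Hy'x [Hz'x Hn']]]]]]]] | Hall].
    2: { exfalso; apply Hnot. split; auto. split; [lra|]. split; [exists y; auto|].
         intros t'' Ht'' a b Ha Hb Hax Hbx.
         destruct (classic (same_comp X k t'' a b)) as [Hc|Hc]; auto.
         exfalso; apply Hall; exists t'', a, b.
         refine (conj _ (conj Ha (conj Hb (conj Hax (conj Hbx Hc))))); lra. }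
    assert (Ht's0 : t' < s0).
    { destruct (Rlt_or_le t' s0); auto. exfalso; apply Hn'; apply Huniq; auto; lra. }
    exists d'. split; auto. intros s'' Hs''. exists y', z'.
    assert (HD: deq X t' s'') by (apply Hdeq2; lra).
    assert (Hy'' : core X k s'' y') by (apply (core_deq X k t'); auto).
    assert (Hz'' : core X k s'' z') by (apply (core_deq X k t'); auto).
    split; [split; [lra | auto]|]. split; [split; [lra|auto]|]. split.
    { intro Hc. apply Hn'. apply (same_comp_deq X k s'' t'); auto. apply deq_sym; auto. }
    split; split; try lra.
    + apply Huniq; [lra | apply core_mono with t'; [lra|auto] | auto | auto | auto].
    + apply Huniq; [lra | apply core_mono with t'; [lra|auto] | auto | auto | auto].
  - intros t y [Ht0 Hcy] Hbr [Hts Hyx].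
    destruct (Rlt_or_le s0 t) as [Hlt|Hle].
    + exfalso. destruct Hbr as [[s1 [Hs1 Hall]] | Hno].
      * assert (B1: s0 <= Rmax s1 s0) by apply Rmax_r.
        assert (B2: Rmax s1 s0 < t) by (apply Rmax_lub_lt; auto).
        destruct (Hall (Rmax s1 s0)) as [a [b [[_ Ha] [[_ Hb] [Hab [[_ Ha'] [_ Hb']]]]]]].
        { split; [apply Rmax_l | auto]. }
        apply Hab. apply Huniq; auto; try lra.
        -- apply same_comp_trans with y; auto. apply same_comp_mono with t; auto.
        -- apply same_comp_trans with y; auto. apply same_comp_mono with t; auto.
      * apply Hno. exists s0, x0. split; auto. split; [split; auto|]. split; [lra|].
        apply Huniq; [lra| apply core_mono with s0; [lra|auto] | auto | auto | auto].
    + split; auto. apply Huniq; [lra | apply core_mono with t; auto | auto | auto | auto].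
Qed.
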